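(* Let $\frac12\le\alpha\le1$ and let $M\in\mathcal{M}^*_{\mathcal{R}}(\alpha)$ be a row-Latin array of order $n$. Then there exists a cell $(i,j)$ such that $M_{ij}$ is a clone and $|R_i(M)\cup C_j(M)|\ge 2\alpha n-1$.
   Context: An array of order $n$ is an $n\times n$ array with a symbol in each cell; an entry is a triple $(i,j,A_{ij})$. An array is row-Latin if no symbol appears more than once in any row; $\mathcal{R}$ denotes the class of all square row-Latin arrays. A transversal of an $m\times m$ array is a set of $m$ entries, no two agreeing in row, column, or symbol; an array is transversal-free if it has no transversal. A symbol is a singleton if it occurs exactly once in the array and a clone otherwise; $M_{ij}$ is called a singleton/clone according to the symbol in cell $(i,j)$. $R_i(M)$, $C_j(M)$ are the sets of symbols in row $i$ and column $j$. For $\frac12\le\alpha\le1$, $\mathcal{M}_{\mathcal{R}}(\alpha)$ is the set of transversal-free arrays in $\mathcal{R}$ whose number of distinct symbols is at least $\alpha$ times the number of cells, and $\mathcal{M}^*_{\mathcal{R}}(\alpha)$ consists of those $A\in\mathcal{M}_{\mathcal{R}}(\alpha)$ such that no array in $\mathcal{M}_{\mathcal{R}}(\alpha)$ has smaller order than $A$, and no array in $\mathcal{M}_{\mathcal{R}}(\alpha)$ of the same order as $A$ has more distinct symbols than $A$. *)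

(* Defs.v *)
From HB Require Import structures.
From mathcomp Require Import all_boot all_order all_algebra.
Set Implicit Arguments. Unset Strict Implicit. Unset Printing Implicit Defensive.
Import Order.TTheory GRing.Theory Num.Theory.

Definition array (n : nat) := 'I_n -> 'I_n -> nat.

Definition row_latin n (A : array n) : Prop :=
  forall (i j1 j2 : 'I_n), A i j1 = A i j2 -> j1 = j2.

Definition is_transversal n (A : array n) (T : {set 'I_n * 'I_n}) : Prop :=
  #|T| = n /\
  forall c d, c \in T -> d \in T -> c <> d ->
    [/\ c.1 <> d.1, c.2 <> d.2 & A c.1 c.2 <> A d.1 d.2].

Definition transversal_free n (A : array n) : Prop :=
  forall T : {set 'I_n * 'I_n}, ~ is_transversal A T.

Definition entries n (A : array n) : seq nat :=
  [seq A i j | i <- enum 'I_n, j <- enum 'I_n].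
Definition nsym n (A : array n) : nat := size (undup (entries A)).

Definition rowsyms n (A : array n) (i : 'I_n) : seq nat := [seq A i j | j <- enum 'I_n].
Definition colsyms n (A : array n) (j : 'I_n) : seq nat := [seq A i j | i <- enum 'I_n].

Definition rowcol_card n (A : array n) (i j : 'I_n) : nat :=
  size (undup (rowsyms A i ++ colsyms A j)).

Definition is_clone n (A : array n) (i j : 'I_n) : Prop :=
  (1 < count_mem (A i j) (entries A))%N.

Definition inM (R : realFieldType) (alpha : R) n (A : array n) : Prop :=
  row_latin A /\ transversal_free A /\
  (alpha * (n * n)%:R <= (nsym A)%:R)%R.

Definition inMstar (R : realFieldType) (alpha : R) n (A : array n) : Prop :=
  inM alpha A /\
  (forall m (B : array m), inM alpha B -> (n <= m)%N) /\
  (forall B : array n, inM alpha B -> (nsym B <= nsym A)%N).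

(* Main.v *)
Require Import Defs.
From HB Require Import structures.
From mathcomp Require Import all_boot all_order all_algebra all_fingroup.
From Stdlib Require Import Classical.
From mathcomp Require Import zify ring lra.
Import Order.TTheory GRing.Theory Num.Theory.
Set Implicit Arguments. Unset Strict Implicit. Unset Printing Implicit Defensive.

Lemma count_entries n (A : array n) x :
  count_mem x (entries A) = \sum_(i < n) \sum_(j < n) (A i j == x).
Proof.
rewrite /entries count_flatten -map_comp sumnE big_map big_enum /=.
apply: eq_bigr => i _; rewrite count_map -big_enum /= -sum1_count.
by rewrite big_mkcond /=.
Qed.

Lemma count_entries2 n (A : array n) x :
  count_mem x (entries A) = \sum_(ij : 'I_n * 'I_n) (A ij.1 ij.2 == x).
Proof. by rewrite count_entries pair_big. Qed.

Lemma single_eq n (A : array n) p q i j :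
  (count_mem (A p q) (entries A) <= 1)%N -> A i j = A p q -> i = p /\ j = q.
Proof.
move=> Hc Heq; case: (eqVneq (i, j) (p, q)) => [[-> ->]|Hne]; first by [].
exfalso; move: Hc; rewrite count_entries2 (bigD1 (p, q)) //= eqxx.
rewrite (bigD1 (i, j)) //= Heq eqxx.
by rewrite addnA ltnNge leq_addr.
Qed.

Lemma entries_in n (A : array n) i j : A i j \in entries A.
Proof. by apply/allpairsP; exists (i, j); rewrite !mem_enum. Qed.

Lemma entriesP n (A : array n) x : x \in entries A -> exists i j, x = A i j.
Proof. by case/allpairsP => -[i j] /= [_ _ ->]; exists i, j. Qed.
Definition cfg n (M : array n) (S S0 Z W : {set 'I_n}) (s0 : {perm 'I_n})
  (z : 'I_n) (s : {perm 'I_n}) : Prop :=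
 [/\ {in S :\ z &, injective (fun c => M (s c) c)},
     (forall c, c \in S :\: Z -> s c = s0 c),
     (forall c, c \in S :\ z -> s c \in (s0 @: S0) :|: W) &
     (forall c, c \in S :\ z -> exists2 d, d \in S0 & M (s c) c = M (s0 d) d)].

Definition fam n (M : array n) (S S0 : {set 'I_n}) c0 s0 (Z W : {set 'I_n}) : Prop :=
  [/\ c0 \in Z, Z \subset S, (#|W| < #|Z|)%N &
      forall z, z \in Z -> exists s, cfg M S S0 Z W s0 z s].

Lemma cfg_mono n (M : array n) (S S0 Z W Z' W' : {set 'I_n}) s0 z s :
  Z \subset Z' -> W \subset W' -> cfg M S S0 Z W s0 z s -> cfg M S S0 Z' W' s0 z s.
Proof.
move=> sZ sW [I1 I2 I3 I4]; split => //.
- move=> c; rewrite !inE => /andP [cZ cS]; apply: I2; rewrite !inE cS andbT.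
  by apply: contra cZ; apply: (subsetP sZ).
- move=> c cS; have := I3 c cS; rewrite !inE => /orP [->//|cW].
  by rewrite (subsetP sW _ cW) orbT.
Qed.

Lemma sz0 n (t : {perm 'I_n}) (z u : 'I_n) : (t * tperm (t z) u)%g z = u.
Proof. by rewrite permM tpermL. Qed.

Lemma step n (M : array n) (HL : row_latin M) (S : {set 'I_n}) c0 (s0 : {perm 'I_n})
  (Hc0 : c0 \in S) (Hn : (2 * #|S| <= n + 1)%N)
  (NR : ~ exists s : {perm 'I_n}, {in S &, injective (fun c => M (s c) c)})
  (Z W : {set 'I_n}) : fam M S (S :\ c0) c0 s0 Z W ->
  exists c', c' \in S :\: Z /\ exists W', fam M S (S :\ c0) c0 s0 (c' |: Z) W'.
Proof.
set S0 := S :\ c0.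
case=> c0Z sZS cWZ HF.
have cS0 : #|S0| = #|S|.-1 by rewrite /S0 (cardsD1 c0 S) Hc0.
have cZS : (#|Z| <= #|S|)%N by apply: subset_leq_card.
have [u Hu] : exists u, u \notin (s0 @: S0) :|: W.
  apply/existsP; rewrite -negb_forall; apply/negP => /forallP Hall.
  have : ([set: 'I_n] \subset (s0 @: S0) :|: W) by apply/subsetP => x _; apply: Hall.
  move/subset_leq_card; rewrite cardsT card_ord => Hle.
  have := leq_trans Hle (leq_card_setU _ _).
  have := leq_imset_card s0 S0; rewrite cS0.
  have : (0 < #|S|)%N by apply/card_gt0P; exists c0.
  move=> H1 H2 H3; have := leq_trans H3 (leq_add H2 (leqnn _)).
  move: Hn cWZ cZS H1; clear; lia.
have uS (t : {perm 'I_n}) (z : 'I_n) : cfg M S S0 Z W s0 z t -> forall c, c \in S :\ z -> t c != u.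
  case=> _ _ I3 _ c cS; apply: contraNneq Hu => <-; exact: I3.
have sE0 (t : {perm 'I_n}) (z : 'I_n) : cfg M S S0 Z W s0 z t -> forall c, c \in S :\ z ->
    (t * tperm (t z) u)%g c = t c.
  move=> Hc c cS; have h1 := uS _ _ Hc c cS.
  rewrite permM tpermD //; last by rewrite eq_sym.
  by rewrite (inj_eq perm_inj) eq_sym; move: cS; rewrite !inE => /andP [].
case: (classic (exists z, z \in Z /\ exists s, cfg M S S0 Z W s0 z s /\
   exists c', [/\ c' \in S :\ z, c' \notin Z & M (s c') c' = M u z])).
  case=> z [zZ [s [Hc [c' [c'S c'Z Heq]]]]].
  exists c'; split; first by move: c'S; rewrite !inE c'Z => /andP [_ ->].
  exists (u |: W); split.
  - by rewrite !inE c0Z orbT.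
  - by rewrite subUset sub1set sZS andbT; move: c'S; rewrite !inE => /andP [].
  - by rewrite cardsU1 (cardsU1 c' Z) c'Z; move: cWZ; case: (u \in W) => /=; lia.
  move=> z'; rewrite !inE => /orP [/eqP ->|z'Z].
    exists (s * tperm (s z) u)%g.
    have zc' : z != c' by move: c'S; rewrite !inE eq_sym => /andP [].
    have cz c : c \in S -> c != z -> c \in S :\ z by move=> cS cz; rewrite !inE cz.
    case: (Hc) => I1 I2 I3 I4.
    split.
    - move=> c d; rewrite !inE => /andP [cc' cS] /andP [dc' dS] /=.
      case: (eqVneq c z) => [->|cz'].
        case: (eqVneq d z) => [->//|dz]; rewrite sz0 sE0 ?cz // -Heq => E.
        by move: dc'; rewrite -(I1 c' d c'S (cz d dS dz) E) eqxx.
      case: (eqVneq d z) => [->|dz].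
        rewrite sz0 sE0 ?cz // -Heq => E.
        by move: cc'; rewrite (I1 c' c c'S (cz c cS cz') (esym E)) eqxx.
      by rewrite !sE0 ?cz //; apply: I1; rewrite cz.
    - move=> c; rewrite !inE negb_or => /andP [/andP [cc' cZ] cS].
      have cz' : c != z by apply: contraNneq cZ => ->.
      by rewrite sE0 ?cz // I2 // !inE cZ cS.
    - move=> c; rewrite !inE => /andP [cc' cS].
      case: (eqVneq c z) => [->|cz']; first by rewrite sz0 eqxx orbT.
      have cSz := cz c cS cz'.
      rewrite (sE0 _ _ Hc c cSz); have := I3 c cSz; rewrite !inE.
      by case/orP => ->; rewrite ?orbT.
    - move=> c; rewrite !inE => /andP [cc' cS].
      case: (eqVneq c z) => [->|cz']; first by rewrite sz0 -Heq; apply: I4.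
      by rewrite sE0 ?cz //; apply: I4; rewrite cz.
  have [s1 Hs1] := HF z' z'Z; exists s1; apply: cfg_mono Hs1.
    by apply/subsetP => x xZ; rewrite !inE xZ orbT.
  by apply/subsetP => x xW; rewrite !inE xW orbT.
move=> Hno; exfalso.
have key : forall z, z \in Z -> exists2 d, d \in Z :\ c0 & M (s0 d) d = M u z.
  move=> z zZ; have [s Hc] := HF z zZ; case: (Hc) => I1 I2 I3 I4.
  have cz c : c \in S -> c != z -> c \in S :\ z by move=> cS cz; rewrite !inE cz.
  case: (classic (exists2 c', c' \in S :\ z & M (s c') c' = M u z)).
    case=> c' c'S Heq.
    case: (boolP (c' \in Z)) => c'Z; last first.
      by exfalso; apply: Hno; exists z; split => //; exists s; split => //; exists c'.
    have [d dS0 Ed] := I4 c' c'S.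
    exists d; last by rewrite -Ed.
    have dS : d \in S by move: dS0; rewrite !inE => /andP [].
    have dc0 : d != c0 by move: dS0; rewrite !inE => /andP [].
    rewrite !inE dc0 /=; apply/negPn/negP => dZ.
    have dz : d != z by apply: contraNneq dZ => ->.
    have sd : s d = s0 d by apply: I2; rewrite !inE dZ dS.
    have := I1 d c' (cz d dS dz) c'S; rewrite /= sd -Ed => /(_ erefl) dc'.
    by move: dZ; rewrite dc' c'Z.
  move=> Hnone; exfalso; apply: NR; exists (s * tperm (s z) u)%g.
  move=> c d cS dS /=.
  case: (eqVneq c z) => [->|cz'].
    case: (eqVneq d z) => [->//|dz]; rewrite sz0 (sE0 _ _ Hc d (cz d dS dz)) => E.
    by exfalso; apply: Hnone; exists d; rewrite ?cz // E.
  case: (eqVneq d z) => [->|dz].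
    rewrite sz0 (sE0 _ _ Hc c (cz c cS cz')) => E.
    by exfalso; apply: Hnone; exists c; rewrite ?cz.
  rewrite (sE0 _ _ Hc c (cz c cS cz')) (sE0 _ _ Hc d (cz d dS dz)).
  by apply: I1; apply: cz.
pose f z := odflt c0 [pick d in Z :\ c0 | M (s0 d) d == M u z].
have fP z : z \in Z -> f z \in Z :\ c0 /\ M (s0 (f z)) (f z) = M u z.
  move=> zZ; rewrite /f; case: pickP => [d /andP [dZ /eqP E] | H] //=.
  have [d dZ E] := key z zZ; by move: (H d); rewrite dZ E eqxx.
have finj : {in Z &, injective f}.
  move=> z1 z2 z1Z z2Z E; have [_ E1] := fP _ z1Z; have [_ E2] := fP _ z2Z.
  by apply: (HL u); rewrite -E1 -E2 E.
have : (#|f @: Z| <= #|Z :\ c0|)%N.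
  apply: subset_leq_card; apply/subsetP => x /imsetP [z zZ ->].
  by have [] := fP z zZ.
by rewrite card_in_imset // (cardsD1 c0 Z) c0Z add1n ltnn.
Qed.

Lemma loop n (M : array n) (HL : row_latin M) (S : {set 'I_n}) c0 (s0 : {perm 'I_n})
  (Hc0 : c0 \in S) (Hn : (2 * #|S| <= n + 1)%N)
  (NR : ~ exists s : {perm 'I_n}, {in S &, injective (fun c => M (s c) c)}) :
  forall m (Z W : {set 'I_n}), (#|S :\: Z| <= m)%N ->
  fam M S (S :\ c0) c0 s0 Z W -> False.
Proof.
elim=> [|m IH] Z W Hm HF; have [c' [c'SZ [W' HF']]] := step HL Hc0 Hn NR HF.
  by move: Hm; rewrite leqn0 cards_eq0 => /eqP E; rewrite E inE in c'SZ.
apply: (IH _ _ _ HF'); rewrite -ltnS; apply: leq_trans Hm; apply: proper_card.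
apply/properP; split.
  by apply/subsetP => x; rewrite !inE negb_or => /andP [/andP [_ ->] ->].
by exists c' => //; rewrite !inE eqxx.
Qed.

Lemma rainbow n (M : array n) (HL : row_latin M) :
  forall k (S : {set 'I_n}), #|S| = k -> (2 * k <= n + 1)%N ->
  exists s : {perm 'I_n}, {in S &, injective (fun c => M (s c) c)}.
Proof.
elim=> [|k IH] S cS Hn.
  exists 1%g => c d; move/eqP: cS; rewrite cards_eq0 => /eqP ->; by rewrite inE.
have [c0 Hc0] : exists c0, c0 \in S by apply/card_gt0P; rewrite cS.
have cS0 : #|S :\ c0| = k by move: cS; rewrite (cardsD1 c0 S) Hc0 add1n => -[].
have Hk : (2 * k <= n + 1)%N by move: Hn; lia.
have [s0 Hs0] := IH (S :\ c0) cS0 Hk.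
case: (classic (exists s : {perm 'I_n}, {in S &, injective (fun c => M (s c) c)})) => // NR.
exfalso; apply: (loop HL Hc0 _ NR (m := #|S|) (Z := [set c0]) (W := set0)).
- by rewrite cS.
- by apply: subset_leq_card; apply: subsetDl.
split.
- by rewrite inE.
- by rewrite sub1set.
- by rewrite cards0 cards1.
move=> z; rewrite inE => /eqP ->; exists s0; split => //.
- by move=> c cS'; rewrite inE imset_f.
- by move=> c cS'; exists c.
Qed.

Definition del n (M : array n.+1) (p q : 'I_n.+1) : array n :=
  fun i j => M (lift p i) (lift q j).

Lemma del_rl n (M : array n.+1) p q : row_latin M -> row_latin (del M p q).
Proof. by move=> HL i j1 j2 /HL /lift_inj. Qed.

Lemma del_tf n (M : array n.+1) p q :
  transversal_free M -> (count_mem (M p q) (entries M) <= 1)%N ->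
  transversal_free (del M p q).
Proof.
move=> HT Hs T [cT HTp].
pose g (x : 'I_n * 'I_n) := (lift p x.1, lift q x.2).
have ginj : injective g.
  move=> [a b] [c d] E.
  have E1 : lift p a = lift p c := congr1 fst E.
  have E2 : lift q b = lift q d := congr1 snd E.
  by rewrite (lift_inj E1) (lift_inj E2).
apply: (HT (g @: T :|: [set (p, q)])); split.
  rewrite setUC cardsU1 card_imset // cT.
  case: imsetP => // -[x _ [E _]]; move: (neq_lift p x.1); by rewrite -E eqxx.
have aux x : (lift p x.1, lift q x.2) <> (p, q) /\
   [/\ p <> lift p x.1, q <> lift q x.2 & M p q <> M (lift p x.1) (lift q x.2)].
  split; first by case=> E _; move: (neq_lift p x.1); rewrite E eqxx.
  split; first by move=> E; move: (neq_lift p x.1); rewrite -E eqxx.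
    by move=> E; move: (neq_lift q x.2); rewrite -E eqxx.
  move=> E; have [E1 _] := single_eq Hs (esym E).
  by move: (neq_lift p x.1); rewrite E1 eqxx.
move=> c d; rewrite !inE => /orP [/imsetP [x xT ->]|/eqP ->] /orP [/imsetP [y yT ->]|/eqP ->] Hne //; last first.
- by have [_ [h1 h2 h3]] := aux y.
- by have [_ [h1 h2 h3]] := aux x; split => // E; [apply: h1|apply: h2|apply: h3]; symmetry; exact: E.
have xy : x <> y by move=> E; apply: Hne; rewrite E.
have [h1 h2 h3] := HTp x y xT yT xy.
by split => /= E; [apply: h1; apply: (lift_inj E)|apply: h2; apply: (lift_inj E)|apply: h3].
Qed.

Lemma nsym_del n (M : array n.+1) p q :
  (nsym M <= nsym (del M p q) +
     size [seq x <- undup (entries M) | x \notin entries (del M p q)])%N.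
Proof.
rewrite /nsym size_filter -(count_predC (mem (entries (del M p q)))).
rewrite leq_add2r -size_filter; apply: uniq_leq_size.
  by rewrite filter_uniq // undup_uniq.
by move=> x; rewrite mem_filter mem_undup => /andP [h _]; rewrite mem_undup.
Qed.

Lemma confined n (M : array n.+1) p q x r c :
  x \notin entries (del M p q) -> M r c = x -> r = p \/ c = q.
Proof.
move=> Hx Ex; case: (unliftP p r) => [r' Er|Er]; last by left.
case: (unliftP q c) => [c' Ec|Ec]; last by right.
exfalso; move/negP: Hx; apply; rewrite -Ex Er Ec; exact: (entries_in (del M p q) r' c').
Qed.

Lemma lost_le n (M : array n.+1) p q i (HL : row_latin M)
  (Hs : (count_mem (M p q) (entries M) <= 1)%N)
  (Hc : (1 < count_mem (M i q) (entries M))%N) :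
  (size [seq x <- undup (entries M) | x \notin entries (del M p q)]
     <= rowcol_card M i q)%N.
Proof.
set L := [seq x <- _ | _].
have ip : i != p by apply: contraTneq Hc => ->; rewrite -leqNgt.
set C := colsyms M q.
have inC r : M r q \in C by apply: map_f; rewrite mem_enum.
pose lx x := odflt q [pick l | M p l == x].
have Lx x : x \in L -> x \notin C -> M p (lx x) = x.
  rewrite mem_filter mem_undup => /andP [Hx xE] xC.
  have [r [c Exc]] := entriesP xE.
  have [rp|cq] := confined Hx (esym Exc); last by move: xC; rewrite Exc cq inC.
  rewrite /lx; case: pickP => [l /eqP //|H].
  by move: (H c); rewrite Exc rp eqxx.
pose phi x := if x \in C then x else M i (lx x).
have -> : size L = size (map phi L) by rewrite size_map.
apply: uniq_leq_size.
  rewrite map_inj_in_uniq; first by rewrite filter_uniq // undup_uniq.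
  move=> x y xL yL; rewrite /phi.
  have xL' := xL; have yL' := yL.
  move: xL' yL'; rewrite !mem_filter => /andP [xnE _] /andP [ynE _].
  case: ifP => xC; case: ifP => yC //.
  - move=> E; exfalso.
    have [ip'|lq] := confined xnE (esym E); first by move: ip; rewrite ip' eqxx.
    have E2 := Lx y yL (negbT yC); by move: yC; rewrite -E2 lq inC.
  - move=> E; exfalso.
    have [ip'|lq] := confined ynE E; first by move: ip; rewrite ip' eqxx.
    have E2 := Lx x xL (negbT xC); by move: xC; rewrite -E2 lq inC.
  move/HL => E; by rewrite -(Lx x xL (negbT xC)) -(Lx y yL (negbT yC)) E.
move=> y /mapP [x xL ->]; rewrite mem_undup mem_cat /phi.
case: ifP => xC; first by rewrite xC orbT.
by rewrite map_f // mem_enum.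
Qed.

Lemma pure_count n (M : array n) (HL : row_latin M) (B : {set 'I_n}) i0 :
  (nsym M + n * #|B| <= n * #|~: B| + #|B| + \sum_(c in B) rowcol_card M i0 c)%N.
Proof.
set R := rowsyms M i0.
have Ru : uniq R by rewrite map_inj_uniq ?enum_uniq // => j1 j2 /HL.
have sR : size R = n by rewrite size_map size_enum_ord.
pose D c := [seq x <- undup (colsyms M c) | x \notin R].
have HD c : (size (D c) + n <= rowcol_card M i0 c)%N.
  suff : (size (R ++ D c) <= rowcol_card M i0 c)%N by rewrite size_cat sR addnC.
  apply: uniq_leq_size.
    rewrite cat_uniq Ru filter_uniq ?undup_uniq //= andbT.
    by apply/hasPn => x; rewrite mem_filter => /andP [].
  move=> x; rewrite mem_cat mem_undup mem_cat => /orP [->//|].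
  by rewrite mem_filter mem_undup => /andP [_ ->]; rewrite orbT.
pose L1 := [seq M i c | i <- enum 'I_n, c <- enum (~: B)].
pose L2 := [seq M i0 c | c <- enum B].
pose L3 := flatten [seq D c | c <- enum B].
have sub : {subset undup (entries M) <= L1 ++ L2 ++ L3}.
  move=> x; rewrite mem_undup => /entriesP [i [c ->]].
  rewrite !mem_cat /L1 /L2 /L3; case: (boolP (c \in B)) => cB; last first.
    by apply/orP; left; apply: (allpairs_f (fun i c => M i c)); rewrite mem_enum ?inE.
  case: (boolP (M i c \in R)) => iR.
    move: iR => /mapP [c' _ ->]; case: (boolP (c' \in B)) => c'B.
      by rewrite map_f ?orbT // mem_enum.
    by apply/orP; left; apply: (allpairs_f (fun i c => M i c)); rewrite mem_enum ?inE.
  apply/orP; right; apply/orP; right; apply/flattenP; exists (D c).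
    by apply: map_f; rewrite mem_enum.
  by rewrite mem_filter iR mem_undup map_f // mem_enum.
have := uniq_leq_size (undup_uniq _) sub.
rewrite !size_cat size_allpairs !size_map -enumT size_enum_ord -!cardE /L3 size_flatten.
rewrite /shape -map_comp sumnE big_map big_enum /= => H1.
have H2 : (\sum_(c in B) (size (D c) + n) <= \sum_(c in B) rowcol_card M i0 c)%N.
  by apply: leq_sum => c _; apply: HD.
rewrite big_split /= sum_nat_const in H2.
rewrite /nsym; move: H1 H2.
set X := \sum_(i in B) size (D i).
set Y := \sum_(i in B) rowcol_card M i0 i.
move=> H1 H2; apply: leq_trans (leq_add H1 (leqnn _)) _.
rewrite -!addnA leq_add2l leq_add2l; apply: leq_trans _ H2.
by rewrite [(n * _)%N]mulnC.
Qed.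

Lemma perm_transversal n (M : array n) (s : {perm 'I_n}) (B : {set 'I_n}) :
  {in B &, injective (fun c => M (s c) c)} ->
  (forall i c, c \notin B -> (count_mem (M i c) (entries M) <= 1)%N) ->
  Defs.is_transversal M [set (s c, c) | c : 'I_n].
Proof.
move=> HB HA; split.
  by rewrite card_imset ?card_ord // => c d [_ ->].
move=> x y /imsetP [c _ ->] /imsetP [d _ ->] Hne.
have cd : c != d by apply: contra_not_neq Hne => ->.
split => /=.
- by move/perm_inj => E; move: cd; rewrite E eqxx.
- by move=> E; move: cd; rewrite E eqxx.
move=> E; case: (boolP (c \in B)) => cB; last first.
  by have [_ E2] := single_eq (HA _ _ cB) (esym E); move: cd; rewrite E2 eqxx.
case: (boolP (d \in B)) => dB; last first.
  by have [_ E2] := single_eq (HA _ _ dB) E; move: cd; rewrite E2 eqxx.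
by move: cd; rewrite (HB c d cB dB E) eqxx.
Qed.

Theorem mainTheorem8 (R : realFieldType) (alpha : R)
  (Ha1 : (2%:R^-1 <= alpha)%R) (Ha2 : (alpha <= 1)%R)
  (n : nat) (M : array n) (HM : inMstar alpha M) :
  exists i j : 'I_n, is_clone M i j /\
    (2%:R * alpha * n%:R - 1 <= (rowcol_card M i j)%:R)%R.
Proof.
case: HM => [[HL [HT Hsym]] [Hmin Hmax]].
case: (classic (exists i j : 'I_n, is_clone M i j /\
    (2%:R * alpha * n%:R - 1 <= (rowcol_card M i j)%:R)%R)) => // Hno; exfalso.
destruct n as [|n].
  by apply: (HT set0); split; [rewrite cards0 | move=> c d; rewrite inE].
case: (classic (exists p q i : 'I_n.+1, (count_mem (M p q) (entries M) <= 1)%N /\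
                 (1 < count_mem (M i q) (entries M))%N)).
  case=> p [q [i [Hs Hc]]]; apply: Hno; exists i, q; split => //.
  have Hdel : ~ inM alpha (del M p q) by move/Hmin; rewrite ltnn.
  have Hlt : ((nsym (del M p q))%:R < alpha * (n * n)%:R)%R.
    rewrite ltNge; apply/negP => H; apply: Hdel.
    by split; [exact: del_rl | split; [exact: del_tf | exact: H]].
  have H1 := nsym_del M p q.
  have H2 := lost_le HL Hs Hc.
  have H3 : ((nsym M)%:R <= (nsym (del M p q))%:R + (rowcol_card M i q)%:R :> R)%R.
    by rewrite -natrD ler_nat; exact: leq_trans H1 (leq_add (leqnn _) H2).
  have EN : ((n.+1)%:R = n%:R + 1 :> R)%R by rewrite -addn1 natrD.
  move: Hsym Hlt H3; rewrite !natrM EN.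
  set N := (n%:R : R)%R; set X := ((rowcol_card M i q)%:R : R)%R.
  set a := ((nsym M)%:R : R)%R; set d := ((nsym (del M p q))%:R : R)%R.
  move=> Hs1 Hs2 Hs3.
  nra.
move=> Hpure.
pose B := [set c | [exists i, (1 < count_mem (M i c) (entries M))%N]].
have HA : forall i c, c \notin B -> (count_mem (M i c) (entries M) <= 1)%N.
  by move=> i c; rewrite inE negb_exists => /forallP /(_ i); rewrite -leqNgt.
have HBc : forall i c, c \in B -> (1 < count_mem (M i c) (entries M))%N.
  move=> i c; rewrite inE => /existsP [i' Hi']; rewrite ltnNge; apply/negP => Hs.
  by apply: Hpure; exists i, c, i'.
have Hb : (2 * #|B| <= n.+1 + 1)%N.
  rewrite leqNgt; apply/negP => Hgt.
  have [c0 c0B] : exists c0, c0 \in B by apply/card_gt0P; lia.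
  have Hrc : forall c, c \in B ->
      ((rowcol_card M ord0 c)%:R < 2%:R * alpha * (n.+1)%:R - 1 :> R)%R.
    move=> c cB; rewrite ltNge; apply/negP => H; apply: Hno; exists ord0, c.
    by split => //; exact: HBc.
  have Hsum : (\sum_(c in B) (rowcol_card M ord0 c)%:R <
               \sum_(c in B) (2%:R * alpha * (n.+1)%:R - 1) :> R)%R.
    apply: ltr_sum; last by move=> c; apply: Hrc.
    by apply/hasP; exists c0; rewrite ?mem_index_enum.
  rewrite sumr_const -natr_sum in Hsum.
  have Hc := pure_count HL B ord0.
  have Hcc : (#|B| + #|~: B| = n.+1)%N by rewrite cardsC card_ord.
  have Hcr : ((nsym M)%:R + (n.+1)%:R * #|B|%:R <=
              (n.+1)%:R * #|~: B|%:R + #|B|%:R + (\sum_(c in B) rowcol_card M ord0 c)%:R :> R)%R.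
    by rewrite -!natrM -!natrD ler_nat.
  have Hccr : (#|B|%:R + #|~: B|%:R = (n.+1)%:R :> R)%R by rewrite -natrD Hcc.
  have Hgtr : ((n.+1)%:R + 2 <= 2 * #|B|%:R :> R)%R.
    by rewrite -natrM -natrD ler_nat; lia.
  move: Hsym; rewrite natrM => Hsym.
  move: Hsum Hcr Hccr Hgtr Hsym.
  set N := ((n.+1)%:R : R)%R; set b := (#|B|%:R : R)%R; set cb := (#|~: B|%:R : R)%R.
  set X := ((\sum_(c in B) rowcol_card M ord0 c)%:R : R)%R; set a := ((nsym M)%:R : R)%R.
  move=> H1 H2 H3 H4 H5.
  have Hh : (0 <= N * (1 - alpha) * (2 * b - N))%R.
    apply: mulr_ge0; [apply: mulr_ge0|]; rewrite ?subr_ge0 //; last by lra.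
  rewrite -mulr_natr in H1.
  nra.
have [s Hs] := rainbow HL (erefl #|B|) Hb.
exact: (HT _ (perm_transversal Hs HA)).
Qed.
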